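(* Let $T \in \mathbb{R}^4 \otimes \mathbb{R}^4 \otimes \mathbb{R}^4$ be the structure tensor of quaternion multiplication with respect to the basis $(1,i,j,k)$ of $\mathbb{H}$, i.e. $T = \sum_{a,b} e_a \otimes e_b \otimes c(x_a x_b)$ where $x_1,\ldots,x_4 = 1,i,j,k$ and $c : \mathbb{H} \to \mathbb{R}^4$ is the coordinate map. Then $Q(T) = 2$, and there is a neighborhood of $T$ in the Euclidean topology in which every tensor has real subrank $2$.
   Context: $\mathbb{H}$ denotes Hamilton's quaternions: the real algebra with basis $1,i,j,k$, unit $1$, $i^2=j^2=k^2=-1$, $ij=k=-ji$, $jk=i=-kj$, $ki=j=-ik$. For $r \geq 0$ let $I_r := \sum_{j=1}^r e_j \otimes e_j \otimes e_j$. The subrank of $T \in \mathbb{R}^{n_1} \otimes \mathbb{R}^{n_2} \otimes \mathbb{R}^{n_3}$ is $Q(T) := \max\{ r \mid \exists\ \mathbb{R}\text{-linear } \varphi_i : \mathbb{R}^{n_i} \to \mathbb{R}^r,\ (\varphi_1 \otimes \varphi_2 \otimes \varphi_3) T = I_r\}$. *)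

(* Defs.v *)
From HB Require Import structures.
From mathcomp Require Import all_boot all_order all_algebra.
From mathcomp Require Import reals.
Set Implicit Arguments. Unset Strict Implicit. Unset Printing Implicit Defensive.
Import Order.TTheory GRing.Theory Num.Theory.
Local Open Scope ring_scope.

(* A tensor in R^n1 (x) R^n2 (x) R^n3, given by its coordinates
   T a b c = coefficient of e_a (x) e_b (x) e_c. *)
Definition tensor3 (R : Type) (n1 n2 n3 : nat) := 'I_n1 -> 'I_n2 -> 'I_n3 -> R.

(* (phi1 (x) phi2 (x) phi3) T, with phi_i : R^{n_i} -> R^r given by r x n_i matrices. *)
Definition tmap3 (R : nzRingType) (n1 n2 n3 r : nat)
  (A : 'M[R]_(r, n1)) (B : 'M[R]_(r, n2)) (C : 'M[R]_(r, n3))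
  (T : tensor3 R n1 n2 n3) : tensor3 R r r r :=
  fun p q s => \sum_(a < n1) \sum_(b < n2) \sum_(c < n3)
                 A p a * B q b * C s c * T a b c.

Definition unit_tensor (R : nzRingType) (r : nat) : tensor3 R r r r :=
  fun p q s => ((p == q) && (q == s))%:R.

Definition restricts_to_unit (R : nzRingType) (n1 n2 n3 : nat)
  (T : tensor3 R n1 n2 n3) (r : nat) : Prop :=
  exists (A : 'M[R]_(r, n1)) (B : 'M[R]_(r, n2)) (C : 'M[R]_(r, n3)),
    tmap3 A B C T = @unit_tensor R r.

Definition has_subrank (R : nzRingType) (n1 n2 n3 : nat)
  (T : tensor3 R n1 n2 n3) (r : nat) : Prop :=
  restricts_to_unit T r /\ (forall r', restricts_to_unit T r' -> (r' <= r)%N).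

(* Quaternion multiplication in coordinates w.r.t. the basis (1,i,j,k),
   determined by i^2=j^2=k^2=-1, ij=k=-ji, jk=i=-kj, ki=j=-ik. *)
Definition qmul (R : nzRingType) (x y : 'I_4 -> R) : 'I_4 -> R :=
  fun c =>
  let x0 := x (inord 0) in let x1 := x (inord 1) in
  let x2 := x (inord 2) in let x3 := x (inord 3) in
  let y0 := y (inord 0) in let y1 := y (inord 1) in
  let y2 := y (inord 2) in let y3 := y (inord 3) in
  match val c with
  | 0 => x0 * y0 - x1 * y1 - x2 * y2 - x3 * y3
  | 1 => x0 * y1 + x1 * y0 + x2 * y3 - x3 * y2
  | 2 => x0 * y2 - x1 * y3 + x2 * y0 + x3 * y1
  | _ => x0 * y3 + x1 * y2 - x2 * y1 + x3 * y0
  end.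

Definition e4 (R : nzRingType) (a : 'I_4) : 'I_4 -> R := fun c => (c == a)%:R.

Definition quat_tensor (R : nzRingType) : tensor3 R 4 4 4 :=
  fun a b c => qmul (@e4 R a) (@e4 R b) c.

(* Main.v *)
Require Import Defs.
From HB Require Import structures.
From mathcomp Require Import all_boot all_order all_algebra.
From mathcomp Require Import reals ring lra zify.
From Stdlib Require Import FunctionalExtensionality.
Import Order.TTheory GRing.Theory Num.Theory.
Local Open Scope ring_scope.
Set Implicit Arguments. Unset Strict Implicit.
Notation c0 := (@Ordinal 4 0 isT).
Notation c1 := (@Ordinal 4 1 isT).
Notation c2 := (@Ordinal 4 2 isT).
Notation c3 := (@Ordinal 4 3 isT).
Lemma i0 : (inord 0 : 'I_4) = c0. Proof. by apply: val_inj; rewrite /= inordK. Qed.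
Lemma i1 : (inord 1 : 'I_4) = c1. Proof. by apply: val_inj; rewrite /= inordK. Qed.
Lemma i2 : (inord 2 : 'I_4) = c2. Proof. by apply: val_inj; rewrite /= inordK. Qed.
Lemma i3 : (inord 3 : 'I_4) = c3. Proof. by apply: val_inj; rewrite /= inordK. Qed.

Lemma sqr_normr (R : realDomainType) (x : R) : `|x| ^+ 2 = x ^+ 2.
Proof. exact: real_normK (num_real x). Qed.

Lemma eqW (R : numDomainType) (a b : R) : a = b -> a <= b.
Proof. by move->. Qed.

Lemma sum4 (V : nmodType) (F : 'I_4 -> V) : \sum_(i < 4) F i = F c0 + F c1 + F c2 + F c3.
Proof.
rewrite !big_ord_recl big_ord0 addr0 !addrA.
by congr (_ + _ + _ + _); congr F; apply: val_inj.
Qed.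

Definition bil (R : nzRingType) (S : tensor3 R 4 4 4) (x y : 'I_4 -> R) (c : 'I_4) : R :=
  \sum_(a < 4) \sum_(b < 4) x a * y b * S a b c.

Lemma tmap3_bil (R : comNzRingType) r (A B C : 'M[R]_(r, 4)) (S : tensor3 R 4 4 4) p q s :
  tmap3 A B C S p q s = \sum_(c < 4) bil S (fun a => A p a) (fun b => B q b) c * C s c.
Proof.
rewrite /tmap3 /bil.
transitivity (\sum_(a < 4) \sum_(b < 4) \sum_(c < 4) A p a * B q b * S a b c * C s c).
  apply: eq_bigr => a _; apply: eq_bigr => b _; apply: eq_bigr => c _; ring.
under eq_bigr do rewrite exchange_big.
rewrite exchange_big; apply: eq_bigr => c _.
rewrite mulr_suml; apply: eq_bigr => a _; by rewrite mulr_suml.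
Qed.

Lemma ker_nz (F : fieldType) m n (A : 'M[F]_(m, n)) :
  ~~ row_free A -> exists u : 'rV_m, u != 0 /\ u *m A = 0.
Proof.
rewrite -kermx_eq0 => nz.
have [i Hi]: exists i, row i (kermx A) != 0.
  apply/existsP; apply: contraR nz; rewrite negb_exists => /forallP H.
  apply/eqP/row_matrixP => i; rewrite row0; exact/eqP/negbNE/H.
by exists (row i (kermx A)); rewrite -row_mul mulmx_ker row0.
Qed.

Lemma unit_of_ker (F : fieldType) n (N : 'M[F]_n) :
  (forall v : 'rV_n, v *m N = 0 -> v = 0) -> N \in unitmx.
Proof.
move=> H; rewrite -row_free_unit; apply/negPn/negP => /ker_nz [u [nz hu]].
by move/eqP: nz; apply; exact: H.
Qed.

Lemma dep2 (F : fieldType) (W : 'M[F]_(2, 4)) (G H : 'M[F]_(3, 4)) :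
  W *m G^T = 0 -> H *m G^T = 1%:M -> exists u : 'rV_2, u != 0 /\ u *m W = 0.
Proof.
move=> hW hH; apply: ker_nz.
have r3 : (3 <= \rank G^T)%N by rewrite -{1}(mxrank1 F 3) -hH mxrankM_maxr.
have := mxrank_mul_min W G^T; rewrite hW mxrank0 /row_free => h.
apply/eqP => e; lia.
Qed.
Lemma bil0x (R : nzRingType) (S : tensor3 R 4 4 4) x y c :
  (forall a, x a = 0) -> bil S x y c = 0.
Proof. by move=> h; rewrite /bil big1 // => a _; rewrite big1 // => b _; rewrite h !mul0r. Qed.

Lemma bilx0 (R : nzRingType) (S : tensor3 R 4 4 4) x y c :
  (forall b, y b = 0) -> bil S x y c = 0.
Proof. by move=> h; rewrite /bil big1 // => a _; rewrite big1 // => b _; rewrite h mulr0 mul0r. Qed.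

Lemma bil_lin (R : comNzRingType) (S : tensor3 R 4 4 4) x m (k : 'I_m -> R) (Y : 'I_m -> 'I_4 -> R) c :
  bil S x (fun b => \sum_(i < m) k i * Y i b) c = \sum_(i < m) k i * bil S x (Y i) c.
Proof.
rewrite /bil.
transitivity (\sum_(a < 4) \sum_(b < 4) \sum_(i < m) k i * (x a * Y i b * S a b c)).
  apply: eq_bigr => a _; apply: eq_bigr => b _; rewrite mulr_sumr mulr_suml.
  by apply: eq_bigr => i _; ring.
under eq_bigr do rewrite exchange_big.
rewrite exchange_big; apply: eq_bigr => i _.
rewrite mulr_sumr; apply: eq_bigr => a _; by rewrite mulr_sumr.
Qed.

Definition ND (R : numDomainType) (S : tensor3 R 4 4 4) :=
  forall x y : 'I_4 -> R, (exists a, x a != 0) -> (exists b, y b != 0) ->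
    exists c, bil S x y c != 0.

Lemma ub (R : fieldType) (S : tensor3 R 4 4 4) :
  (forall x y : 'I_4 -> R, (exists a, x a != 0) -> (exists b, y b != 0) ->
    exists c, bil S x y c != 0) ->
  forall r, restricts_to_unit S r -> (r <= 2)%N.
Proof.
move=> nd r [A [B [C h]]]; rewrite leqNgt; apply/negP => r3.
have hU : forall p q s, \sum_(c < 4) bil S (fun a => A p a) (fun b => B q b) c * C s c
    = ((p == q) && (q == s))%:R.
  by move=> p q s; rewrite -tmap3_bil h.
pose pt (t : 'I_3) : 'I_r := Ordinal (leq_trans (ltn_ord t) r3).
have h0 : (0 < r)%N by lia.
pose p0 : 'I_r := Ordinal h0.
have hq : forall i : 'I_2, (i.+1 < r)%N by move=> i; have := ltn_ord i; lia.
pose qi (i : 'I_2) : 'I_r := Ordinal (hq i).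
pose W : 'M[R]_(2, 4) := \matrix_(i, c) bil S (fun a => A p0 a) (fun b => B (qi i) b) c.
pose G : 'M[R]_(3, 4) := \matrix_(t, c) C (pt t) c.
pose H : 'M[R]_(3, 4) := \matrix_(t, c) bil S (fun a => A (pt t) a) (fun b => B (pt t) b) c.
have hW : W *m G^T = 0.
  apply/matrixP => i t; rewrite !mxE.
  under eq_bigr do rewrite !mxE.
  rewrite hU.
  suff -> : (p0 == qi i) = false by [].
  by apply/negbTE; rewrite -(inj_eq val_inj).
have hH : H *m G^T = 1%:M.
  apply/matrixP => t t'; rewrite !mxE.
  under eq_bigr do rewrite !mxE.
  rewrite hU eqxx /=.
  by rewrite -(inj_eq val_inj) /=.
have [u [unz hu]] := dep2 hW hH.
pose y b := \sum_(i < 2) u 0 i * B (qi i) b.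
have hy : forall c, bil S (fun a => A p0 a) y c = 0.
  move=> c; rewrite bil_lin.
  have := congr1 (fun M : 'M[R]_(1,4) => M 0 c) hu; rewrite !mxE => e; rewrite -[X in _ = X]e.
  by apply: eq_bigr => i _; rewrite mxE.
have hx : exists a, A p0 a != 0.
  apply/existsP; apply: contraT; rewrite negb_exists => /forallP H0.
  have := hU p0 p0 p0; rewrite !eqxx /= big1 => [|c _]; last first.
    rewrite bil0x ?mul0r // => a; exact/eqP/negbNE/H0.
  by move/eqP; rewrite eq_sym oner_eq0.
have hy' : exists b, y b != 0.
  apply/existsP; apply: contraT; rewrite negb_exists => /forallP H0.
  move: unz; apply: contraNT => _.
  apply/eqP/rowP => i; rewrite !mxE.
  have e : \sum_(c < 4) bil S (fun a => A (qi i) a) y c * C (qi i) c = u 0 i.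
    under eq_bigr do rewrite bil_lin mulr_suml.
    rewrite exchange_big /=.
    under eq_bigr => j _ do under eq_bigr do rewrite -mulrA.
    under eq_bigr do rewrite -mulr_sumr hU.
    rewrite (bigD1 i) //= !eqxx /= mulr1 big1 ?addr0 // => j hj.
    suff -> : (qi i == qi j) = false by rewrite mulr0.
    apply/negbTE; rewrite -(inj_eq val_inj) /= eqSS.
    by rewrite (inj_eq val_inj) eq_sym.
  rewrite -e big1 // => c _; rewrite bilx0 ?mul0r // => b; exact/eqP/negbNE/H0.
have [c] := nd (fun a => A p0 a) y hx hy'.
by rewrite hy eqxx.
Qed.
Lemma ord4P (c : 'I_4) : c = c0 \/ c = c1 \/ c = c2 \/ c = c3.
Proof.
case: c => [[|[|[|[|m]]]] h].
- by left; apply: val_inj.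
- by right; left; apply: val_inj.
- by right; right; left; apply: val_inj.
- by right; right; right; apply: val_inj.
- by [].
Qed.

Lemma bilT (R : comNzRingType) x y c : bil (@quat_tensor R) x y c = qmul x y c.
Proof.
rewrite /bil !sum4.
case: (ord4P c) => [->|[->|[->|->]]];
  rewrite /quat_tensor /qmul /e4 !i0 !i1 !i2 !i3 /=; ring.
Qed.

Lemma bil_sub (R : nzRingType) (S1 S2 : tensor3 R 4 4 4) x y c :
  bil S1 x y c - bil S2 x y c = bil (fun a b c => S1 a b c - S2 a b c) x y c.
Proof.
rewrite /bil -sumrB; apply: eq_bigr => a _; rewrite -sumrB; apply: eq_bigr => b _.
by rewrite mulrBr.
Qed.

Lemma bil_bound (R : realFieldType) (D : tensor3 R 4 4 4) x y c e :
  (forall a b, `|D a b c| <= e) ->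
  `|bil D x y c| <= e * (\sum_(a < 4) `|x a|) * (\sum_(b < 4) `|y b|).
Proof.
move=> h; rewrite /bil.
apply: (le_trans (ler_norm_sum _ _ _)).
apply: (@le_trans _ _ (\sum_(a < 4) \sum_(b < 4) `|x a| * `|y b| * e)).
  apply: ler_sum => a _; apply: (le_trans (ler_norm_sum _ _ _)).
  apply: ler_sum => b _; rewrite !normrM.
  by apply: ler_wpM2l => //; rewrite mulr_ge0.
rewrite !sum4; apply/eqW; ring.
Qed.

Lemma sq_le (R : realFieldType) (t K : R) : `|t| <= K -> t ^+ 2 <= K ^+ 2.
Proof.
move=> h; rewrite -sqr_normr; have := normr_ge0 t; nra.
Qed.

Lemma final_ineq (R : realFieldType) (X1 Y1 X2 Y2 K : R) :
  0 < X2 -> 0 < Y2 -> 0 <= X1 -> 0 <= Y1 -> X1 ^+ 2 <= 4 * X2 -> Y1 ^+ 2 <= 4 * Y2 ->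
  X2 * Y2 <= 4 * K ^+ 2 -> K = 1 / 16 * X1 * Y1 -> False.
Proof.
move=> hx hy hx1 hy1 h1 h2 h3 hK.
have h4 : X1 ^+ 2 * Y1 ^+ 2 <= (4 * X2) * (4 * Y2).
  by apply: ler_pM => //; rewrite exprn_ge0.
have h5 : 0 < X2 * Y2 by rewrite mulr_gt0.
move: h3; rewrite hK => h3.
have e : (1 / 16 * X1 * Y1) ^+ 2 = X1 ^+ 2 * Y1 ^+ 2 / 256 by field.
rewrite e in h3.
lra.
Qed.

Lemma cs4 (R : realFieldType) (a b c d : R) :
  (a + b + c + d) ^+ 2 <= 4 * (a ^+ 2 + b ^+ 2 + c ^+ 2 + d ^+ 2).
Proof.
have h : 0 <= (a - b) ^+ 2 + (a - c) ^+ 2 + (a - d) ^+ 2 + (b - c) ^+ 2 + (b - d) ^+ 2 + (c - d) ^+ 2.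
  by rewrite !addr_ge0 // sqr_ge0.
rewrite -subr_ge0; apply: le_trans h _; apply: eqW; ring.
Qed.

Lemma sq_pos (R : realFieldType) (a : R) : a != 0 -> 0 < a ^+ 2.
Proof. by move=> h; rewrite lt_neqAle sqr_ge0 andbT eq_sym sqrf_eq0. Qed.

Lemma pos4 (R : realFieldType) (a b c d : R) :
  a != 0 \/ b != 0 \/ c != 0 \/ d != 0 -> 0 < a ^+ 2 + b ^+ 2 + c ^+ 2 + d ^+ 2.
Proof.
have := sqr_ge0 a; have := sqr_ge0 b; have := sqr_ge0 c; have := sqr_ge0 d.
move=> ? ? ? ?; case=> [/sq_pos|[/sq_pos|[/sq_pos|/sq_pos]]]; lra.
Qed.

Lemma nd_near (R : realFieldType) (S : tensor3 R 4 4 4) :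
  (forall a b c, `|S a b c - @quat_tensor R a b c| < 1 / 16) ->
  forall x y : 'I_4 -> R, (exists a, x a != 0) -> (exists b, y b != 0) ->
    exists c, bil S x y c != 0.
Proof.
move=> hS x y [a0 ha] [b0 hb].
case: (pickP (fun c => bil S x y c != 0)) => [c hc|H0]; first by exists c.
have z : forall c, bil S x y c = 0.
  by move=> c; move/negbT: (H0 c); rewrite negbK => /eqP.
have hq : forall c, `|qmul x y c| <= 1 / 16 * (\sum_(a < 4) `|x a|) * (\sum_(b < 4) `|y b|).
  move=> c; have -> : qmul x y c = bil (@quat_tensor R) x y c - bil S x y c by rewrite z subr0 bilT.
  rewrite bil_sub.
  by apply: bil_bound => a b; rewrite distrC; apply: ltW.
have q0 := sq_le (hq c0); have q1 := sq_le (hq c1).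
have q2 := sq_le (hq c2); have q3 := sq_le (hq c3).
set K := 1 / 16 * _ * _ in q0 q1 q2 q3.
have hK : K = 1 / 16 * (`|x c0| + `|x c1| + `|x c2| + `|x c3|) *
                       (`|y c0| + `|y c1| + `|y c2| + `|y c3|) by rewrite /K !sum4.
move: q0 q1 q2 q3; rewrite /qmul !i0 !i1 !i2 !i3 /= => q0 q1 q2 q3.
exfalso; apply: (final_ineq (X2 := x c0 ^+ 2 + x c1 ^+ 2 + x c2 ^+ 2 + x c3 ^+ 2)
                   (Y2 := y c0 ^+ 2 + y c1 ^+ 2 + y c2 ^+ 2 + y c3 ^+ 2) _ _ _ _ _ _ _ hK).
- by apply: pos4; case: (ord4P a0) ha => [->|[->|[->|->]]] ?; tauto.
- by apply: pos4; case: (ord4P b0) hb => [->|[->|[->|->]]] ?; tauto.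
- by rewrite !addr_ge0.
- by rewrite !addr_ge0.
- rewrite -[x c0 ^+ 2]sqr_normr -[x c1 ^+ 2]sqr_normr -[x c2 ^+ 2]sqr_normr -[x c3 ^+ 2]sqr_normr.
  exact: cs4.
- rewrite -[y c0 ^+ 2]sqr_normr -[y c1 ^+ 2]sqr_normr -[y c2 ^+ 2]sqr_normr -[y c3 ^+ 2]sqr_normr.
  exact: cs4.
- apply: le_trans (_ : _ <= K ^+ 2 + K ^+ 2 + K ^+ 2 + K ^+ 2) _; last by apply/eqW; ring.
  apply: le_trans (lerD (lerD (lerD q0 q1) q2) q3); apply/eqW; ring.
Qed.
Lemma bound4 (R : realFieldType) (v d : 'I_4 -> R) e :
  (forall k, `|d k| <= e) -> `|\sum_(k < 4) v k * d k| <= e * \sum_(k < 4) `|v k|.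
Proof.
move=> h; apply: (le_trans (ler_norm_sum _ _ _)); rewrite mulr_sumr.
apply: ler_sum => k _; rewrite normrM mulrC; apply: ler_wpM2r => //.
Qed.

Lemma bil_delta (R : nzRingType) (S : tensor3 R 4 4 4) x y a0 b0 c :
  (forall a, x a = (a == a0)%:R) -> (forall b, y b = (b == b0)%:R) -> bil S x y c = S a0 b0 c.
Proof.
move=> hx hy.
rewrite /bil (bigD1 a0) //= [X in _ + X]big1 => [|a ha]; last first.
  by rewrite big1 // => b _; rewrite hx (negbTE ha) !mul0r.
rewrite addr0 (bigD1 b0) //= [X in _ + X]big1 => [|b hb]; last by rewrite hy (negbTE hb) mulr0 mul0r.
by rewrite addr0 hx hy !eqxx !mul1r.
Qed.

Definition ak (k : 'I_4) : 'I_4 := if (val k < 2)%N then c0 else c1.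
Definition bk (k : 'I_4) : 'I_4 := if odd (val k) then c2 else c0.
Definition sig (c : 'I_4) : 'I_4 := if val c == 1%N then c2 else if val c == 2%N then c1 else c.
Definition ap (p : 'I_2) : 'I_4 := if val p == 0%N then c0 else c1.
Definition bq (q : 'I_2) : 'I_4 := if val q == 0%N then c0 else c2.
Definition kidx (p q : 'I_2) : 'I_4 :=
  if val p == 0%N then (if val q == 0%N then c0 else c1) else (if val q == 0%N then c2 else c3).

Lemma sumT (R : comNzRingType) (v : 'I_4 -> R) c :
  \sum_(k < 4) v k * @quat_tensor R (ak k) (bk k) c = v (sig c).
Proof.
rewrite sum4 /ak /bk /=.
case: (ord4P c) => [->|[->|[->|->]]]; rewrite /quat_tensor /qmul /e4 !i0 !i1 !i2 !i3 /sig /=; ring.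
Qed.
Lemma lb (R : realFieldType) (S : tensor3 R 4 4 4) :
  (forall a b c, `|S a b c - @quat_tensor R a b c| < 1 / 16) -> restricts_to_unit S 2.
Proof.
move=> hS.
pose N : 'M[R]_4 := \matrix_(k, c) S (ak k) (bk k) c.
have Nu : N \in unitmx.
  apply: unit_of_ker => v hv.
  have key : forall c, `|v 0 (sig c)| <= 1 / 16 * \sum_(k < 4) `|v 0 k|.
    move=> c; have e1 := congr1 (fun M : 'M[R]_(1, 4) => M 0 c) hv.
    rewrite /= !mxE in e1.
    have e2 : v 0 (sig c) = - \sum_(k < 4) v 0 k * (S (ak k) (bk k) c - @quat_tensor R (ak k) (bk k) c).
      rewrite -(sumT (fun k => v 0 k)).
      under [X in _ = - X]eq_bigr do rewrite mulrBr.
      rewrite sumrB.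
      have e1' : \sum_(k < 4) v 0 k * S (ak k) (bk k) c = 0.
        by rewrite -[RHS]e1; apply: eq_bigr => k _; rewrite mxE.
      by rewrite e1' sub0r opprK.
    by rewrite e2 normrN; apply: bound4 => k; apply: ltW.
  have k0 := key c0; have k1 := key c1; have k2 := key c2; have k3 := key c3.
  move: k0 k1 k2 k3; rewrite /sig /= !sum4 => k0 k1 k2 k3.
  have g0 := normr_ge0 (v 0 c0); have g1 := normr_ge0 (v 0 c1).
  have g2 := normr_ge0 (v 0 c2); have g3 := normr_ge0 (v 0 c3).
  have z : forall k, `|v 0 k| = 0.
    move=> k; apply/le_anti; rewrite normr_ge0 andbT.
    case: (ord4P k) => [->|[->|[->|->]]]; lra.
  by apply/rowP => k; rewrite mxE; apply/eqP; rewrite -normr_eq0 z.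
pose A : 'M[R]_(2, 4) := \matrix_(p, a) (a == ap p)%:R.
pose B : 'M[R]_(2, 4) := \matrix_(q, b) (b == bq q)%:R.
pose C : 'M[R]_(2, 4) := \matrix_(s, c) invmx N c (kidx s s).
exists A, B, C.
apply: functional_extensionality => p; apply: functional_extensionality => q.
apply: functional_extensionality => s.
rewrite tmap3_bil.
have e : forall c, bil S (fun a => A p a) (fun b => B q b) c = N (kidx p q) c.
  move=> c; rewrite (@bil_delta _ _ _ _ (ap p) (bq q)); last 2 first.
  - by move=> a; rewrite mxE.
  - by move=> b; rewrite mxE.
  rewrite mxE; congr S.
  + by case: p => [[|[|m]] hp] //; case: q => [[|[|m']] hq].
  + by case: p => [[|[|m]] hp] //; case: q => [[|[|m']] hq].
have := congr1 (fun M : 'M[R]_4 => M (kidx p q) (kidx s s)) (mulmxV Nu).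
rewrite /= [in RHS]mxE => h.
transitivity ((kidx p q == kidx s s)%:R : R).
  by rewrite -h mxE; apply: eq_bigr => c _; rewrite e [C s c]mxE.
clear e h; rewrite /unit_tensor.
suff -> : (kidx p q == kidx s s) = ((p == q) && (q == s)) by [].
by case: p => [[|[|m]] hp] //; case: q => [[|[|m']] hq] //; case: s => [[|[|m'']] hs].
Qed.
Theorem lemma4p12 (R : realType) :
  has_subrank (@quat_tensor R) 2 /\
  exists eps : R, 0 < eps /\
    forall S : tensor3 R 4 4 4,
      (forall a b c, `|S a b c - @quat_tensor R a b c| < eps) ->
      has_subrank S 2.
Proof.
have hnear : forall S : tensor3 R 4 4 4,
    (forall a b c, `|S a b c - @quat_tensor R a b c| < 1 / 16) -> has_subrank S 2.
  move=> S hS; split; first exact: lb.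
  exact: ub (nd_near hS).
split.
  by apply: hnear => a b c; rewrite subrr normr0; lra.
exists (1 / 16); split; first lra.
exact: hnear.
Qed.
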